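(* Let $G=AB$ be a finite $\pi$-separable group that is the product of subgroups $A$ and $B$, and suppose $G=AB$ is a core-factorisation. Let $H$ be a Hall $\pi$-subgroup of $G$ such that $H=(H\cap A)(H\cap B)$, with $H\cap A$ a Hall $\pi$-subgroup of $A$ and $H\cap B$ a Hall $\pi$-subgroup of $B$ (such an $H$ always exists). Then, if $H\neq 1$, $H=(H\cap A)(H\cap B)$ is also a core-factorisation.
   Context: $\pi$ is a set of primes. A subgroup $U$ of $G$ covers a section $V/W$ ($W\trianglelefteq V\le G$) if $W(U\cap V)=V$. If $1\neq G=AB$ is a product of subgroups $A$ and $B$, then $G=AB$ is called a core-factorisation if $G$ possesses a chief series each of whose chief factors is covered by $A$ or by $B$. *)

(* Defs.v *)
From mathcomp Require Import all_boot all_fingroup all_solvable.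
Set Implicit Arguments. Unset Strict Implicit. Unset Printing Implicit Defensive.
Local Open Scope group_scope.

(* U covers the section V/W  iff  W (U :&: V) = V. *)
Definition covers (gT : finGroupType) (U V W : {set gT}) : bool :=
  W * (U :&: V) == V.

Definition pi_separable (gT : finGroupType) (pi : nat_pred) (G : {group gT}) : Prop :=
  exists s : seq {group gT},
    path [rel H K : {group gT} | (H <| K) && (pi.-group (K / H) || pi^'.-group (K / H))]
         1%G s /\ last 1%G s = G.

Definition core_factorisation (gT : finGroupType) (G : {group gT}) (A B : {set gT}) : Prop :=
  [/\ G :!=: 1, A * B = G &
      exists s : seq {group gT},
        path [rel V U : {group gT} | chief_factor G V U && (covers A U V || covers B U V)]
             1%G s /\ last 1%G s = G].

(* Main.v *)
Require Import Defs.
From mathcomp Require Import all_boot all_fingroup all_solvable.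
Set Implicit Arguments. Unset Strict Implicit.
Local Open Scope group_scope.

Lemma key (gT : finGroupType) (pi : nat_pred) (G A H U V : {group gT}) :
  pi.-Hall(G) H -> pi.-Hall(A) (H :&: A) -> A \subset G ->
  U <| G -> V <| G -> V \subset U -> V * (A :&: U) = U ->
  (H :&: V) * (H :&: A :&: U) = H :&: U.
Proof.
move=> hH hHA sAG nUG nVG sVU cov.
have nAU : A :&: U <| A by rewrite /normal subsetIl normsI ?normG // (subset_trans sAG) ?normal_norm.
have nAV : A :&: V <| A by rewrite /normal subsetIl normsI ?normG // (subset_trans sAG) ?normal_norm.
have c1 := card_Hall (Hall_setI_normal nUG hH).
have c2 := card_Hall (Hall_setI_normal nVG hH).
have c3 := card_Hall (Hall_setI_normal nAU hHA).
have c4 := card_Hall (Hall_setI_normal nAV hHA).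
have e1 : (H :&: A) :&: (A :&: U) = H :&: A :&: U.
  by apply/setP=> x; rewrite !inE; case: (x \in H); case: (x \in A).
have e2 : (H :&: A) :&: (A :&: V) = H :&: A :&: V.
  by apply/setP=> x; rewrite !inE; case: (x \in H); case: (x \in A).
have e3 : (H :&: V) :&: (H :&: A :&: U) = H :&: A :&: V.
  apply/setP=> x; rewrite !inE; case: (x \in H); case: (x \in A); rewrite /= ?andbF //.
  by case xV: (x \in V); rewrite ?andbF ?andbT // (subsetP sVU).
have e4 : V :&: (A :&: U) = A :&: V.
  apply/setP=> y; rewrite !inE; case xV: (y \in V); rewrite ?andbF //=.
  by rewrite (subsetP sVU) ?andbT.
have m1 := mul_cardG V (A :&: U)%G.
rewrite /= cov e4 in m1.
have m2 := mul_cardG (H :&: V)%G (H :&: A :&: U)%G.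
rewrite /= e3 in m2.
have pm : (#|V|`_pi * #|A :&: U|`_pi = #|U|`_pi * #|A :&: V|`_pi)%N.
  by rewrite -!partnM ?cardG_gt0 // m1.
rewrite /= e1 in c3; rewrite /= e2 in c4; rewrite /= in c1 c2 m2.
rewrite -c2 -c3 -c4 -c1 in pm.
apply/eqP; rewrite eqEcard; apply/andP; split.

  rewrite mulG_subG !subsetI !subsetIl (subset_trans _ sVU) ?subsetIr //=.
  by rewrite andbT -setIA subsetIl.
have hp := cardG_gt0 (H :&: A :&: V)%G; rewrite -(leq_pmul2r hp) /= -pm m2. exact: leqnn.
Qed.
Lemma chain (gT : finGroupType) (H X Y : {group gT}) :
  X <| H -> Y <| H -> X \subset Y ->
  exists t : seq {group gT},
    path [rel V U : {group gT} | [&& chief_factor H V U, X \subset V & U \subset Y]] X t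
    /\ last X t = Y.
Proof.
move=> nXH nYH.
have [n] := ubnP (#|Y| - #|X|); elim: n X nXH => // n IH X nXH ltn sXY.
have [eXY | neXY] := eqVneq (X : {set gT}) Y.
  by exists [::]; split => //=; apply: val_inj.
have pXY : X \proper Y by rewrite properEneq neXY.
have [|M minM] := @ex_mingroup gT
  (fun M : {group gT} => [&& X \proper M, M \subset Y & H \subset 'N(M)]).
  by exists Y; rewrite pXY subxx normal_norm.
have [/and3P [pXM sMY nMH] minP] := mingroupP minM.
have nMH' : M <| H by rewrite /normal nMH (subset_trans sMY) ?normal_sub.
have [|t [pt lt]] := IH M nMH' _ sMY.
  move: ltn; rewrite ltnS; apply: leq_trans; rewrite ltn_sub2l //.
    by apply: (proper_card (proper_sub_trans pXM sMY)).
  by apply: proper_card.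
exists (M :: t); split => //=.
rewrite subxx sMY !andbT; apply/andP; split; last first.
  apply: sub_path pt => V U /= /and3P [-> sMV ->].
  by rewrite (subset_trans (proper_sub pXM) sMV).
rewrite /chief_factor nMH' andbT.
apply/maxgroupP; split; first by rewrite pXM normal_norm.
move=> N /andP [pNM nNH] sXN.
apply/eqP; apply/negPn/negP => neNX.
have pXN : X \proper N by rewrite properEneq eq_sym neNX.
have eNM := minP N _ (proper_sub pNM).
have := proper_neq pNM; rewrite eNM ?eqxx //.
by rewrite pXN nNH (subset_trans (proper_sub pNM) sMY).
Qed.

Lemma cov_sub (gT : finGroupType) (X Y V U K : {group gT}) :
  X * (K :&: Y) = Y -> X \subset V -> V \subset U -> U \subset Y ->
  covers K U V.
Proof.
move=> eY sXV sVU sUY; rewrite /covers eqEsubset mulG_subG sVU subsetIr /=.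
have sXU := subset_trans sXV sVU.
have e : (K :&: Y) :&: U = K :&: U.
  by apply/setP=> x; rewrite !inE; case xU: (x \in U); rewrite ?andbF ?andbT // (subsetP sUY x xU) andbT.
have : X * ((K :&: Y) :&: U) = U by rewrite group_modl // eY; apply/setIidPr.
rewrite e => {1}<-; exact: mulSg.
Qed.

Lemma series (gT : finGroupType) (pi : nat_pred) (G A B H : {group gT}) :
  pi.-Hall(G) H -> pi.-Hall(A) (H :&: A) -> pi.-Hall(B) (H :&: B) ->
  A \subset G -> B \subset G ->
  forall (s : seq {group gT}) (V : {group gT}), V <| G ->
  path [rel V U : {group gT} | chief_factor G V U && (covers A U V || covers B U V)] V s ->
  exists t : seq {group gT},
    path [rel V U : {group gT} | chief_factor H V U && (covers (H :&: A) U V || covers (H :&: B) U V)]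
      (H :&: V)%G t /\ last (H :&: V)%G t = (H :&: last V s)%G.
Proof.
move=> hH hHA hHB sAG sBG; elim=> [|U s IH] V nVG /=.
  by move=> _; exists [::].
case/andP=> /andP [cf cov] ps.
have [mx nUG] := andP cf.
have pVU : V \proper U by have [/andP []] := maxgroupP mx.
have sVU := proper_sub pVU.
have sHG : H \subset G by case/andP: hH.
have nHV : (H :&: V)%G <| H.
  by rewrite /normal subsetIl normsI ?normG // (subset_trans sHG) ?normal_norm.
have nHU : (H :&: U)%G <| H.
  by rewrite /normal subsetIl normsI ?normG // (subset_trans sHG) ?normal_norm.
have sXY : (H :&: V)%G \subset (H :&: U)%G by rewrite setIS.
have [t1 [p1 l1]] := chain nHV nHU sXY.
have [t2 [p2 l2]] := IH U nUG ps.
exists (t1 ++ t2); rewrite cat_path last_cat l1 l2 p2 andbT; split => //.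
apply: sub_path p1 => V' U' /= /and3P [cf' s1 s2]; rewrite cf' /=.
have sV'U' : V' \subset U'.
  by have [mx' _] := andP cf'; have [/andP [/proper_sub]] := maxgroupP mx'.
have eK : forall K : {group gT}, pi.-Hall(K) (H :&: K) -> K \subset G -> covers K U V ->
    covers (H :&: K) U' V'.
  move=> K hK sKG cK; apply: (cov_sub (X := (H :&: V)%G) (Y := (H :&: U)%G)) => //.
  rewrite /=; apply: etrans (key hH hK sKG nUG nVG sVU (eqP cK)); congr (_ * _).
  by apply/setP=> x; rewrite !inE; case: (x \in H); case: (x \in K); case: (x \in U).
by case/orP: cov => [cA|cB]; [rewrite (eK A) | rewrite (eK B) ?orbT].
Qed.

Unset Implicit Arguments. Set Strict Implicit.
Theorem mainTheorem2 (gT : finGroupType) (pi : nat_pred) (G A B H : {group gT}) :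
  pi_separable pi G ->
  A * B = G ->
  core_factorisation G A B ->
  pi.-Hall(G) H ->
  H = (H :&: A) * (H :&: B) :> {set gT} ->
  pi.-Hall(A) (H :&: A) ->
  pi.-Hall(B) (H :&: B) ->
  H :!=: 1 ->
  core_factorisation H (H :&: A) (H :&: B).
Proof.
move=> _ eAB [_ _ [s [ps ls]]] hH eH hHA hHB ntH.
have sAG : A \subset G by rewrite -eAB mulG_subl.
have sBG : B \subset G by rewrite -eAB mulG_subr.
have sHG : H \subset G by case/andP: hH.
have [t [pt lt]] := series hH hHA hHB sAG sBG (normal1 G) ps.
split => //; exists t.
have e1 : (H :&: 1)%G = 1%G by apply: val_inj; rewrite /= setIg1.
rewrite -e1; split => //; rewrite lt ls; apply: val_inj => /=; exact/setIidPl.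
Qed.
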